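(* For all positive integers $n,k$, $$WS(n+k) \geq S(k)\left(WS(n) + \left\lceil \frac{WS(n)}{2}\right\rceil + 1\right) + WS(n).$$
   Context: A set $A \subseteq \mathbb{N}$ is sum-free if for all $(a,b)\in A^2$ (allowing $a=b$), $a+b \notin A$. A set $B\subseteq\mathbb{N}$ is weakly sum-free if for all $(a,b)\in B^2$ with $a\neq b$, $a+b\notin B$. $S(n)$ (the Schur number) is the largest $p$ such that $\{1,\dots,p\}$ can be partitioned into $n$ sum-free subsets; $WS(n)$ (the weak Schur number) is the largest $p$ such that $\{1,\dots,p\}$ can be partitioned into $n$ weakly sum-free subsets. *)

(* Defs.v *)
From mathcomp Require Import all_boot.
Set Implicit Arguments. Unset Strict Implicit. Unset Printing Implicit Defensive.

Definition sum_free (A : nat -> Prop) : Prop :=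
  forall a b, A a -> A b -> ~ A (a + b).
Definition weakly_sum_free (A : nat -> Prop) : Prop :=
  forall a b, A a -> A b -> a <> b -> ~ A (a + b).

(* {1,...,p} can be partitioned into n subsets each satisfying P:
   a colouring c assigns to every x in {1..p} a part index c x < n;
   the parts are the colour classes (some may be empty). *)
Definition partitionable (P : (nat -> Prop) -> Prop) (n p : nat) : Prop :=
  exists c : nat -> nat,
    (forall x, 1 <= x <= p -> c x < n) /\
    (forall i, i < n -> P (fun x => 1 <= x <= p /\ c x = i)).

Definition is_largest (P : (nat -> Prop) -> Prop) (n s : nat) : Prop :=
  partitionable P n s /\ forall p, partitionable P n p -> p <= s.

Definition is_Schur_number (n s : nat) : Prop := is_largest sum_free n s.
Definition is_weak_Schur_number (n w : nat) : Prop :=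
  is_largest weakly_sum_free n w.

Definition ceil_half (m : nat) : nat := (m + 1) %/ 2.

(* Main.v *)
Require Import Defs.
From mathcomp Require Import all_boot.
From mathcomp Require Import zify.

Lemma eqL (L q q' a b : nat) : q * L + a = q' * L + b -> a < L + b -> b < L + a -> q = q'.
Proof.
move=> E h1 h2.
case: (ltngtP q q') => // H.
- have : q.+1 * L <= q' * L by rewrite leq_mul2r H orbT.
  rewrite mulSn; lia.
- have : q'.+1 * L <= q * L by rewrite leq_mul2r H orbT.
  rewrite mulSn; lia.
Qed.

Theorem corollary3p2 (n k Sk WSn WSnk : nat) :
  0 < n -> 0 < k ->
  is_Schur_number k Sk ->
  is_weak_Schur_number n WSn ->
  is_weak_Schur_number (n + k) WSnk ->
  Sk * (WSn + ceil_half WSn + 1) + WSn <= WSnk.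
Proof.
move=> n0 k0 [[cS [cSb cSf]] _] [[cA [cAb cAf]] _] [_ Hmax].
apply: Hmax.
rewrite /ceil_half.
set m := WSn.
set c := (m + 1) %/ 2.
have c1 : c.*2 <= m + 1 by rewrite /c; lia.
have c2 : m <= c.*2 by rewrite /c; lia.
set L := m + c + 1.
have L0 : 0 < L by rewrite /L; lia.
set N := Sk * L + m.
pose col x := if ((x + c) %/ L == 0) || (m < (x + c) %% L)
              then cA ((x + c) %% L - c) else n + cS ((x + c) %/ L).
have dec : forall x, 1 <= x <= N ->
  (exists q r, [/\ x = q * L + r, 1 <= r <= m, (q == 0) || (m - c + 1 <= r)
       & col x = cA r]) \/
  (exists q r, [/\ x + c = q * L + r, r <= m, 1 <= q <= Sk & col x = n + cS q]).
  move=> x /andP [x1 xN].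
  have E := divn_eq (x + c) L.
  have Hr : (x + c) %% L < L by rewrite ltn_pmod.
  rewrite /col.
  set q := (x + c) %/ L in E *.
  set r := (x + c) %% L in E Hr *.
  case: ifP => H.
  - left; exists q, (r - c).
    case/orP: H => [/eqP q0|mr].
    + rewrite q0 /= in E *; rewrite mul0n add0n in E.
      split => //; [lia | rewrite /L in Hr; lia].
    + have mc : c <= m by lia.
      split; [lia | rewrite /L in Hr; lia | lia | by []].
  - right; exists q, r.
    move/negbT: H; rewrite negb_or -leqNgt => /andP [q0 rm].
    split => //.
    apply/andP; split; first lia.
    case: (leqP q Sk) => // qS.
    have : Sk.+1 * L <= q * L by rewrite leq_mul2r qS orbT.
    rewrite mulSn /N /L in xN *; rewrite /L in E; lia.
exists col; split.
- move=> x xr; case: (dec x xr) => [[q [r [_ rr _ ->]]]|[q [r [_ _ qr ->]]]].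
  + have := cAb r rr; lia.
  + have := cSb q qr; lia.
- move=> i _ a b [ar ca] [br cb] ab [abr cab].
  case: (leqP n i) => ni.
  +
    have getB : forall x, 1 <= x <= N -> col x = i ->
       exists q r, [/\ x + c = q * L + r, r <= m, 1 <= q <= Sk & cS q = i - n].
      move=> x xr cx; case: (dec x xr) => [[q [r [_ rr _ e]]]|[q [r [e1 e2 e3 e]]]].
      * have := cAb r rr; lia.
      * exists q, r; split => //; lia.
    have [q1 [r1 [e1 r1m q1r s1]]] := getB a ar ca.
    have [q2 [r2 [e2 r2m q2r s2]]] := getB b br cb.
    have [q3 [r3 [e3 r3m q3r s3]]] := getB (a + b) abr cab.
    have Eq : (q1 + q2) * L + (r1 + r2) = q3 * L + (r3 + c).
      rewrite mulnDl; lia.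
    have qq := @eqL L _ _ _ _ Eq.
    have qe : q1 + q2 = q3 by apply: qq; rewrite /L; lia.
    apply: (cSf (i - n) _ q1 q2) => //.
    * have := cSb q1 q1r; lia.
    * by rewrite qe.
  + have getA : forall x, 1 <= x <= N -> col x = i ->
       exists q r, [/\ x = q * L + r, 1 <= r <= m, (q == 0) || (m - c + 1 <= r) & cA r = i].
      move=> x xr cx; case: (dec x xr) => [[q [r [e1 e2 e3 e]]]|[q [r [_ _ _ e]]]].
      * exists q, r; split => //; lia.
      * lia.
    have [q1 [r1 [e1 r1m q1r s1]]] := getA a ar ca.
    have [q2 [r2 [e2 r2m q2r s2]]] := getA b br cb.
    have [q3 [r3 [e3 r3m q3r s3]]] := getA (a + b) abr cab.
    case: (ltnP (r1 + r2) (L + r3)) => h.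
    * have Eq : (q1 + q2) * L + (r1 + r2) = q3 * L + r3 by rewrite mulnDl; lia.
      have qe : q1 + q2 = q3 by apply: (@eqL L _ _ _ _ Eq) => //; rewrite /L; lia.
      have re : r1 + r2 = r3 by move/eqP: Eq; rewrite -qe eqn_add2l => /eqP.
      case: (eqVneq r1 r2) => [rr|rn].
      -- have qn : q1 != q2 by apply/eqP => qq; apply: ab; rewrite e1 e2 qq rr.
         have : m - c + 1 <= r1.
           case/orP: q1r => [/eqP q10|//].
           case/orP: q2r => [/eqP q20|]; first by rewrite q10 q20 in qn.
           by rewrite -rr.
         lia.
      -- have rn' : r1 <> r2 by apply/eqP.
         apply: (cAf i ni r1 r2 (conj r1m s1) (conj r2m s2) rn'); by rewrite re.
    * case: (eqVneq q3 0) => [q30|q3n].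
      -- rewrite q30 mul0n add0n in e3; lia.
      -- rewrite (negbTE q3n) /= in q3r; rewrite /L in h; lia.
Qed.
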